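(* Let $n\ge2$ and let $\mathbb{F}$ be any field. Then $\mathrm{Der}_{\mathrm{inn}}(\mathbb{F}T_{4n})$ has dimension $3(n-1)$ over $\mathbb{F}$, and an $\mathbb{F}$-basis is $\{d_g\mid g\in\{a^i,\ a^{2i}b,\ a^{2i+1}b\mid 1\le i\le n-1\}\}$.
   Context: $T_{4n}=\langle a,b\mid a^{2n}=1,\ a^n=b^2,\ b^{-1}ab=a^{-1}\rangle$ is the dicyclic group of order $4n$; $\mathbb{F}T_{4n}$ is its group algebra. For $\beta\in\mathbb{F}T_{4n}$, the inner derivation $d_\beta$ is $d_\beta(\alpha)=\alpha\beta-\beta\alpha$; $\mathrm{Der}_{\mathrm{inn}}(\mathbb{F}T_{4n})=\{d_\beta\mid\beta\in\mathbb{F}T_{4n}\}$, an $\mathbb{F}$-vector space. *)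

(* Defs.v *)
From HB Require Import structures.
From mathcomp Require Import all_boot all_order all_algebra all_fingroup.
From mathcomp Require Import ring zify.
Set Implicit Arguments. Unset Strict Implicit. Unset Printing Implicit Defensive.
Import GRing.Theory.

(* Concrete model: the pair (i, e) stands for a^i b^e, with i taken mod 2n. *)
Definition dic (n : nat) := ('Z_(2 * n) * bool)%type.
HB.instance Definition _ n := Finite.on (dic n).

Section DicGroup.
Variable n : nat.
Local Open Scope ring_scope.
Let nn : 'Z_(2 * n) := n%:R.

Definition dic_mul (x y : dic n) : dic n :=
  (x.1 + (if x.2 then - y.1 else y.1) + (if x.2 && y.2 then nn else 0),
   x.2 (+) y.2).
Definition dic_one : dic n := (0, false).
Definition dic_inv (x : dic n) : dic n :=
  if x.2 then (x.1 + nn, true) else (- x.1, false).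

Lemma nn_double : nn + nn = 0.
Proof.
rewrite /nn -natrD addnn -mul2n.
case: n => [|m]; first by rewrite muln0.
apply/val_inj => /=; rewrite val_Zp_nat ?modnn //; lia.
Qed.

Lemma nn_opp : - nn = nn.
Proof. by apply/eqP; rewrite eq_sym -subr_eq0 opprK nn_double. Qed.

Lemma dic_mulA : associative dic_mul.
Proof.
move=> [i e] [j f] [k g]; rewrite /dic_mul /=.
congr pair; last by rewrite addbA.
case: e; case: f; case: g => /=; rewrite ?opprD ?opprK ?nn_opp; ring.
Qed.

Lemma dic_mul1 : left_id dic_one dic_mul.
Proof. by move=> [i e]; rewrite /dic_mul /= add0r addr0. Qed.

Lemma dic_mulV : left_inverse dic_one dic_inv dic_mul.
Proof.
move=> [i e]; rewrite /dic_mul /dic_inv /dic_one /=.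
case: e => /=; congr pair => //.
- by rewrite addrAC -[i + nn + nn]addrA nn_double addr0 subrr.
- by rewrite addNr addr0.
Qed.

End DicGroup.

HB.instance Definition _ n :=
  Finite_isGroup.Build (dic n) (@dic_mulA n) (@dic_mul1 n) (@dic_mulV n).

Definition dic_a (n : nat) : dic n := (1%R, false).
Definition dic_b (n : nat) : dic n := (0%R, true).

(* Sanity checks: the concrete model satisfies the defining presentation
   of T_{4n}, is generated by a and b, and has order 4n. *)
Lemma dic_mulE n (x y : dic n) : (x * y)%g = dic_mul x y. Proof. by []. Qed.
Lemma dic_invE n (x : dic n) : (x^-1)%g = dic_inv x. Proof. by []. Qed.
Lemma dic_oneE n : (1 : dic n)%g = dic_one n. Proof. by []. Qed.
Lemma dic_aX n k : (dic_a n ^+ k)%g = ((k%:R)%R, false).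
Proof.
elim: k => [|k IH]; first by [].
by rewrite expgS IH dic_mulE /dic_mul /= addr0 mulrS.
Qed.
Lemma dic_a_order n : (dic_a n ^+ (2 * n))%g = 1%g.
Proof. by rewrite dic_aX dic_oneE /dic_one; congr pair; rewrite [X in (X%:R)%R]mul2n -addnn natrD nn_double. Qed.
Lemma dic_ab n : (dic_a n ^+ n)%g = (dic_b n ^+ 2)%g.
Proof. by rewrite dic_aX expgS expg1 dic_mulE /dic_mul /= oppr0 !add0r. Qed.
Lemma dic_conj n : ((dic_b n)^-1 * dic_a n * dic_b n)%g = (dic_a n)^-1%g.
Proof.
rewrite !dic_mulE dic_invE /dic_mul /dic_inv /= oppr0 !addr0 add0r.
by rewrite dic_invE /dic_inv /= addrAC nn_double add0r.
Qed.
Lemma card_dic n : (0 < n)%N -> #|[set: dic n]| = (4 * n)%N.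
Proof.
move=> n0; rewrite cardsT card_prod card_ord Zp_cast ?card_bool; lia.
Qed.
Lemma dic_gen n : (0 < n)%N -> <<[set dic_a n; dic_b n]>>%g = [set: dic n].
Proof.
move=> n0; apply/eqP; rewrite eqEsubset subsetT /=; apply/subsetP => -[i e] _.
have -> : (i, e) = (dic_a n ^+ i * (if e then dic_b n else 1))%g.
  rewrite dic_aX dic_mulE; case: e; rewrite /dic_mul /= ?oppr0 ?addr0 ?natr_Zp //.
apply: groupM; first by apply: groupX; apply: mem_gen; rewrite !inE eqxx.
by case: e => //; apply: mem_gen; rewrite !inE eqxx orbT.
Qed.

Section GroupAlgebra.
Variables (F : fieldType) (G : finGroupType).
Local Open Scope ring_scope.

(* Elements of F G are the formal sums \sum_g x(g) g, i.e. functions G -> F. *)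
Definition galg := {ffun G -> F^o}.

Definition gmul (x y : galg) : galg :=
  [ffun g => \sum_(h : G) x h * y (h^-1 * g)%g].

Definition gdelta (g : G) : galg := [ffun h => (h == g)%:R].

Definition inner_der_fun (beta : galg) (alpha : galg) : galg :=
  gmul alpha beta - gmul beta alpha.
Definition inner_der (beta : galg) : 'End(galg) := linfun (inner_der_fun beta).

Definition Der_inn : {vspace 'End(galg)} :=
  limg (linfun inner_der : 'Hom(galg, 'End(galg))).

End GroupAlgebra.

Section GroupAlgebraFacts.
Local Open Scope ring_scope.

Variables (F : fieldType) (G : finGroupType).
Lemma gmul_linl (z : galg F G) a x y : gmul (a *: x + y) z = a *: gmul x z + gmul y z.
Proof.
apply/ffunP=> g; rewrite !ffunE scaler_sumr -big_split /=; apply: eq_bigr => h _.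
by rewrite !ffunE /= mulrDl -scalerAl.
Qed.
Lemma gmul_linr (z : galg F G) a x y : gmul z (a *: x + y) = a *: gmul z x + gmul z y.
Proof.
apply/ffunP=> g; rewrite !ffunE scaler_sumr -big_split /=; apply: eq_bigr => h _.
by rewrite !ffunE /= mulrDr -scalerAr.
Qed.
Lemma inner_der_fun_linear (beta : galg F G) : linear (inner_der_fun beta).
Proof.
move=> a x y; rewrite /inner_der_fun gmul_linl gmul_linr scalerBr.
by rewrite opprD !addrA; congr (_ + _); rewrite -!addrA; congr (_ + _); rewrite addrC.
Qed.
HB.instance Definition _ (beta : galg F G) := GRing.isLinear.Build F _ _ _ (inner_der_fun beta) (inner_der_fun_linear beta).
Lemma inner_derE (beta alpha : galg F G) : inner_der beta alpha = gmul alpha beta - gmul beta alpha.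
Proof. by rewrite /inner_der lfunE. Qed.
Lemma inner_der_linear : linear (@inner_der F G).
Proof.
move=> a x y; apply/lfunP => alpha.
rewrite !add_lfunE !scale_lfunE !inner_derE /= gmul_linl gmul_linr scalerBr.
by rewrite opprD !addrA; congr (_ + _); rewrite -!addrA; congr (_ + _); rewrite addrC.
Qed.
HB.instance Definition _ := GRing.isLinear.Build F _ _ _ (@inner_der F G) inner_der_linear.
Lemma Der_innP d : d \in Der_inn F G <-> exists beta, d = inner_der beta.
Proof.
split.
  by case/memv_imgP => beta _ ->; exists beta; rewrite lfunE.
by case=> beta ->; rewrite -[inner_der beta](lfunE (inner_der (G := G))) memv_img ?memvf.
Qed.
End GroupAlgebraFacts.

(* Main.v *)
Require Import Defs.
From HB Require Import structures.
From mathcomp Require Import all_boot all_order all_algebra all_fingroup.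
From mathcomp Require Import ring zify.
Set Implicit Arguments. Unset Strict Implicit. Unset Printing Implicit Defensive.
Import GRing.Theory.

Local Open Scope ring_scope.



Definition cfun (F : fieldType) (G : finGroupType) (b : galg F G) := forall x y : G, b (x^-1 * y * x)%g = b y.

Lemma gmul_dl (F : fieldType) (G : finGroupType) x (b : galg F G) g : gmul (gdelta F x) b g = b (x^-1 * g)%g.
Proof.
rewrite ffunE (bigD1 x) //= ffunE eqxx mul1r big1 ?addr0 // => h hx.
by rewrite ffunE (negbTE hx) mul0r.
Qed.

Lemma gmul_dr (F : fieldType) (G : finGroupType) (b : galg F G) x g : gmul b (gdelta F x) g = b (g * x^-1)%g.
Proof.
rewrite ffunE (bigD1 (g * x^-1)%g) //= ffunE invMg invgK -mulgA mulVg mulg1 eqxx mulr1.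
rewrite big1 ?addr0 // => h hx; rewrite ffunE.
case: eqP => [E|_]; last by rewrite mulr0.
by case/eqP: hx; rewrite -E invMg invgK mulgA mulgV mul1g.
Qed.

Lemma der0_cf (F : fieldType) (G : finGroupType) (b : galg F G) : inner_der b = 0 -> cfun b.
Proof.
move=> D x y; have := congr1 (fun f : 'End(galg F G) => f (gdelta F x) (y * x)%g) D.
rewrite inner_derE zero_lfunE ffunE gmul_dl ffunE gmul_dr ffunE.
rewrite -mulgA mulgV mulg1 mulgA => /eqP; rewrite subr_eq0 => /eqP.
by [].
Qed.

Lemma cf_der0 (F : fieldType) (G : finGroupType) (b : galg F G) : cfun b -> inner_der b = 0.
Proof.
move=> cb; apply/lfunP => al; rewrite inner_derE zero_lfunE; apply/ffunP => g.
rewrite !ffunE; apply/eqP; rewrite subr_eq0; apply/eqP.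
have inj : injective (fun k : G => g * k^-1)%g.
  by move=> k1 k2 /mulgI /invg_inj.
rewrite [RHS](reindex_inj inj) /=; apply: eq_bigr => k _.
rewrite invMg invgK -mulgA mulVg mulg1 mulrC; congr (_ * _).
by rewrite -[LHS](cb (k^-1)%g) invgK mulKVg.
Qed.




Lemma supp_span (F : fieldType) (G : finGroupType) (s : seq G) v g :
  v \in <<map (@gdelta F G) s>>%VS -> g \notin s -> v g = 0.
Proof.
elim: s v => [|h s IH] v /=.
  by rewrite span_nil memv0 => /eqP -> _; rewrite ffunE.
rewrite span_cons => /memv_addP [y /vlineP [k ->] [z zs ->]].
rewrite inE negb_or => /andP [gh gs].
by rewrite !ffunE (IH _ zs gs) (negbTE gh) scaler0 addr0.
Qed.

Lemma free_delta (F : fieldType) (G : finGroupType) (s : seq G) : uniq s -> free (map (@gdelta F G) s).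
Proof.
elim: s => [|h s IH] /=; first by rewrite nil_free.
move=> /andP [hs us]; rewrite free_cons IH // andbT.
apply/negP => /supp_span /(_ hs); rewrite ffunE eqxx => /eqP.
by rewrite oner_eq0.
Qed.

Definition ind (F : fieldType) (G : finGroupType) (C : {set G}) : galg F G := [ffun h => (h \in C)%:R].

Lemma ind_sum (F : fieldType) (G : finGroupType) (C : {set G}) : ind F C = \sum_(c in C) gdelta F c.
Proof.
apply/ffunP => h; rewrite !ffunE sum_ffunE.
case hC: (h \in C).
  rewrite (bigD1 h) //= ffunE eqxx big1 ?addr0 // => c /andP [_ ch].
  by rewrite ffunE eq_sym (negbTE ch).
by rewrite big1 // => c cC; rewrite ffunE; case: eqP => // E; rewrite E cC in hC.
Qed.

Definition cls (G : finGroupType) (g : G) : {set G} := [set (x^-1 * g * x)%g | x : G].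

Lemma ind_cls_cf (F : fieldType) (G : finGroupType) (g : G) : cfun (ind F (cls g)).
Proof.
move=> x y; rewrite !ffunE; suff -> : ((x^-1 * y * x)%g \in cls g) = (y \in cls g) by [].
apply/idP/idP => /imsetP [z _ E]; apply/imsetP.
  exists (z * x^-1)%g => //.
  have -> : y = (x * (x^-1 * y * x) * x^-1)%g by rewrite !mulgA mulgV mul1g mulgK.
  by rewrite E invMg invgK !mulgA.
exists (z * x)%g => //.
by rewrite E invMg !mulgA.
Qed.

Lemma mem_cls (G : finGroupType) (g : G) : g \in cls g.
Proof. by apply/imsetP; exists 1%g => //; rewrite invg1 mulg1 mul1g. Qed.

Theorem gen_basis (F : fieldType) (G : finGroupType) (s : seq G) :
  uniq s ->
  (forall g, g \notin s -> {subset cls g :\ g <= s}) ->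
  (forall g, g \in s -> exists x : G, (x^-1 * g * x)%g \notin s) ->
  basis_of (Der_inn F G) [seq inner_der (gdelta F g) | g <- s].
Proof.
move=> us HA HB.
set D := (linfun (@inner_der F G) : 'Hom(galg F G, 'End(galg F G))).
set U := <<map (@gdelta F G) s>>%VS.
have bU : basis_of U (map (@gdelta F G) s) by rewrite /basis_of eqxx free_delta.
have UK : (U :&: lker D = 0)%VS.
  apply/eqP; rewrite -subv0; apply/subvP => v /memv_capP [vU].
  rewrite memv_ker lfunE /= => /eqP /der0_cf cv; rewrite memv0; apply/eqP/ffunP => g.
  rewrite ffunE.
  case gs: (g \in s); last by apply: (supp_span vU); rewrite gs.
  have [x xs] := HB g gs; by rewrite -(cv x) (supp_span vU xs).
have := limg_basis_of UK bU.
have -> : map D (map (@gdelta F G) s) = [seq inner_der (gdelta F g) | g <- s].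
  by rewrite -map_comp; apply: eq_map => g /=; rewrite lfunE.
suff -> : (D @: U)%VS = Der_inn F G by [].
apply/eqP; rewrite eqEsubv limgS ?subvf //=.
rewrite /Der_inn -/D.
have -> : (fullv = <<map (@gdelta F G) (enum G)>>)%VS.
  apply/eqP; rewrite eqEsubv subvf andbT; apply/subvP => v _.
  have -> : v = \sum_(g : G) v g *: gdelta F g.
    apply/ffunP => h; rewrite sum_ffunE (bigD1 h) //= !ffunE eqxx.
    rewrite big1 ?addr0 => [|c ch]; last by rewrite !ffunE eq_sym (negbTE ch) scaler0.
    by rewrite -[X in _ = X]/(v h * 1) mulr1.
  apply: rpred_sum => g _; apply: memvZ; apply: memv_span; apply: map_f.
  by rewrite mem_enum.
rewrite limg_span /U limg_span; apply/span_subvP => w /mapP [d /mapP [g _ ->] ->].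
case gs: (g \in s); first by apply: memv_span; rewrite map_f // map_f.
have E : gdelta F g = ind F (cls g) - \sum_(c in cls g :\ g) gdelta F c.
  rewrite ind_sum (bigD1 g) ?mem_cls //=.
  have -> : \sum_(c in cls g :\ g) gdelta F c = \sum_(c in cls g | c != g) gdelta F c.
    by apply: eq_bigl => c; rewrite !inE andbC.
  by rewrite addrK.
rewrite E linearB /= lfunE /= (cf_der0 (ind_cls_cf F g)) sub0r rpredN linear_sum /=.
apply: rpred_sum => c cC; apply: memv_span; rewrite map_f // map_f //.
by apply: (HA g); rewrite ?gs.
Qed.



Lemma dic_conjE n (x y : dic n) : (x^-1 * y * x)%g =
  (if y.2 then (if x.2 then x.1 + x.1 - y.1 else y.1 - x.1 - x.1)
   else (if x.2 then - y.1 else y.1), y.2).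
Proof.
case: x y => [k e] [j f]; have H := nn_double n.
have A1 : forall (R : comRingType) (k j m : R), m + m = 0 -> k + m - j + m + k + 0 = k + k - j.
  by move=> R k0 j0 m Hm; rewrite ?addr0; apply/eqP; rewrite -subr_eq0 -Hm; apply/eqP; ring.
have A2 : forall (R : comRingType) (k j m : R), m + m = 0 -> k + m - j + 0 - k + m = - j.
  by move=> R k0 j0 m Hm; rewrite ?addr0; apply/eqP; rewrite -subr_eq0 -Hm; apply/eqP; ring.
case: e; case: f; rewrite !dic_mulE dic_invE /dic_mul /dic_inv /=; congr pair.
- exact: A1.
- exact: A2.
- ring.
- ring.
Qed.

Lemma valZ n k : (1 < 2 * n)%N -> val (k%:R : 'Z_(2 * n)) = (k %% (2 * n))%N.
Proof. by move=> h; exact: val_Zp_nat. Qed.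

Lemma negZ n v : (1 < 2 * n)%N -> (v <= 2 * n)%N ->
  - (v%:R : 'Z_(2 * n)) = ((2 * n - v)%N)%:R.
Proof.
move=> h hv; rewrite natrB //.
have -> : ((2 * n)%:R : 'Z_(2 * n)) = 0 by apply: val_inj; rewrite /= valZ // modnn.
by rewrite sub0r.
Qed.

Definition Sdic n : seq (dic n) :=
    ([seq dic_a n ^+ i | i <- iota 1 n.-1]
     ++ [seq dic_a n ^+ (2 * i) * dic_b n | i <- iota 1 n.-1]
     ++ [seq dic_a n ^+ (2 * i).+1 * dic_b n | i <- iota 1 n.-1])%g.

Lemma aXb n k : (dic_a n ^+ k * dic_b n)%g = (k%:R, true).
Proof. by rewrite dic_aX dic_mulE /dic_mul /= !addr0. Qed.

Lemma SdicE n : Sdic n =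
    [seq (i%:R, false) | i <- iota 1 n.-1]
     ++ [seq ((2 * i)%:R, true) | i <- iota 1 n.-1]
     ++ [seq ((2 * i).+1%:R, true) | i <- iota 1 n.-1].
Proof.
rewrite /Sdic; congr (_ ++ (_ ++ _)); apply: eq_map => i; by rewrite ?aXb ?dic_aX.
Qed.

Definition inS n (g : dic n) : bool :=
  if g.2 then (2 <= val g.1)%N else (0 < val g.1 < n)%N.

Lemma memS n g : (2 <= n)%N -> (g \in Sdic n) = inS g.
Proof.
move=> n2; have h1 : (1 < 2 * n)%N by lia.
case: g => [[v vlt] f]; rewrite SdicE /inS /= !mem_cat.
have vj : (v < 2 * n)%N by apply: (leq_trans vlt); rewrite Zp_cast.
rewrite -[Ordinal vlt]natr_Zp /=.
apply/idP/idP.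
  case/or3P => /mapP [i]; rewrite mem_iota => /andP [i1 i2] [E ->] /=;
    move: (congr1 val E); rewrite /= !valZ // !modn_small; lia.
case: f => H.
  have := odd_double_half v; case: (odd v) => /= E.
    apply/orP; right; apply/orP; right; apply/mapP; exists v./2.
      rewrite mem_iota; lia.
    congr pair; congr (_ %:R); lia.
  apply/orP; right; apply/orP; left; apply/mapP; exists v./2.
    rewrite mem_iota; lia.
  congr pair; congr (_ %:R); lia.
apply/orP; left; apply/mapP; exists v; rewrite ?mem_iota //; lia.
Qed.

Lemma injZ n i j : (1 < 2 * n)%N -> (i < 2 * n)%N -> (j < 2 * n)%N ->
  (i%:R : 'Z_(2 * n)) = j%:R -> i = j.
Proof.
move=> h hi hj /(congr1 val); rewrite /= !valZ // !modn_small //.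
Qed.

Lemma uniqS n : (2 <= n)%N -> uniq (Sdic n).
Proof.
move=> n2; have h1 : (1 < 2 * n)%N by lia.
rewrite SdicE !cat_uniq.
have U1 : forall f : nat -> nat, (forall i j, (0 < i < n)%N -> (0 < j < n)%N -> f i = f j -> i = j) ->
   (forall i, (0 < i < n)%N -> (f i < 2 * n)%N) -> forall b : bool,
   uniq [seq ((f i)%:R : 'Z_(2 * n), b) | i <- iota 1 n.-1].
  move=> f finj fb b.
  have inj : {in iota 1 n.-1 &, injective (fun i => ((f i)%:R : 'Z_(2 * n), b))}.
    move=> i j; rewrite !mem_iota => hi hj [/injZ E]; apply: finj; try lia.
    by apply: E => //; apply: fb; lia.
  by rewrite (map_inj_in_uniq inj) iota_uniq.
rewrite (U1 id) /=; [|by []|lia].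
rewrite (U1 (fun i => 2 * i)%N) /=; [|lia|lia].
rewrite (U1 (fun i => (2 * i).+1)%N) /=; [|lia|lia].
rewrite andbT; apply/andP; split.
  apply/hasPn => x; rewrite mem_cat => /orP [] /mapP [i _ ->];
  by apply/mapP => -[j _].
apply/hasPn => x /mapP [i]; rewrite mem_iota => hi ->.
apply/mapP => -[j]; rewrite mem_iota => hj [/injZ E].
have := E h1; lia.
Qed.

Lemma sizeS n : size (Sdic n) = (3 * (n - 1))%N.
Proof. rewrite SdicE !size_cat !size_map size_iota; lia. Qed.


Lemma oddZ n (e : nat) : (1 < 2 * n)%N -> odd (val (e%:R : 'Z_(2 * n))) = odd e.
Proof. by move=> h; rewrite valZ // odd_mod // oddM. Qed.

Lemma HB n (g : dic n) : (2 <= n)%N -> g \in Sdic n ->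
  exists x : dic n, (x^-1 * g * x)%g \notin Sdic n.
Proof.
move=> n2; have h1 : (1 < 2 * n)%N by lia.
rewrite !memS //; case: g => [[v vlt] f].
have vj : (v < 2 * n)%N by apply: (leq_trans vlt); rewrite Zp_cast.
rewrite -[Ordinal vlt]natr_Zp /inS /= valZ // modn_small //.
case: f => H.
  exists ((v./2)%:R, false); rewrite dic_conjE /=.
  have -> : (v%:R : 'Z_(2 * n)) = (odd v)%:R + (v./2)%:R + (v./2)%:R.
    by rewrite -!natrD -addnA addnn -{1}(odd_double_half v).
  rewrite !addrK memS // /inS /= valZ // modn_small; [by case: (odd v)|].
  by case: (odd v); lia.
exists (0, true).
have -> : (((0, true) : dic n)^-1 * (v%:R, false) * ((0, true) : dic n))%g = (((2 * n - v)%N)%:R, false) :> dic n.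
  by rewrite dic_conjE -negZ // ltnW.
rewrite memS // /inS /= valZ // modn_small; lia.
Qed.

Lemma par_fin (r v : nat) : odd r = odd v -> r != v -> (v < 2)%N -> (2 <= r)%N.
Proof. by case: r => [|[|r]] //; case: v => [|[|v]]. Qed.

Lemma HA n (g : dic n) : (2 <= n)%N -> g \notin Sdic n -> {subset cls g :\ g <= Sdic n}.
Proof.
move=> n2; have h1 : (1 < 2 * n)%N by lia.
move=> gS c; rewrite !inE => /andP [cg /imsetP [x _ E]]; rewrite {c}E in cg *.
move: gS cg; rewrite !memS //; case: g => [[v vlt] f]; case: x => [[w wlt] e].
have vj : (v < 2 * n)%N by apply: (leq_trans vlt); rewrite Zp_cast.
have wj : (w < 2 * n)%N by apply: (leq_trans wlt); rewrite Zp_cast.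
rewrite -[Ordinal vlt]natr_Zp -[Ordinal wlt]natr_Zp dic_conjE.
case: f; case: e; rewrite /inS; cbn [fst snd nat_of_ord];
  rewrite (valZ _ h1) (modn_small vj) => H.
- have -> : (w%:R + w%:R - v%:R : 'Z_(2 * n)) = ((w + w + (2 * n - v))%N)%:R.
    by rewrite !natrD negZ // ltnW.
  move=> cg; rewrite valZ //; apply: (par_fin (v:=v)); last by rewrite ltnNge.
    rewrite odd_mod; last by rewrite oddM.
    rewrite !oddD (oddB (ltnW vj)) oddM /=.
    by case: (odd w); case: (odd v).
  apply: contra cg => /eqP E; apply/eqP; congr pair; apply: val_inj.
  by rewrite (valZ _ h1) E (valZ _ h1) (modn_small vj).
- have -> : (v%:R - w%:R - w%:R : 'Z_(2 * n)) = ((v + (2 * n - w) + (2 * n - w))%N)%:R.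
    by rewrite !natrD negZ // ltnW.
  move=> cg; rewrite valZ //; apply: (par_fin (v:=v)); last by rewrite ltnNge.
    rewrite odd_mod; last by rewrite oddM.
    rewrite !oddD (oddB (ltnW wj)) oddM /=.
    by case: (odd w); case: (odd v).
  apply: contra cg => /eqP E; apply/eqP; congr pair; apply: val_inj.
  by rewrite (valZ _ h1) E (valZ _ h1) (modn_small vj).
- rewrite (negZ h1 (ltnW vj)) => cg; rewrite (valZ _ h1).
  case: (posnP v) => [v0|vpos].
    move: cg; rewrite v0 subn0.
    have -> : ((2 * n)%:R : 'Z_(2 * n)) = 0%:R by apply: val_inj; rewrite (valZ _ h1) (valZ _ h1) modnn mod0n.
    by rewrite eqxx.
  have hv : (2 * n - v < 2 * n)%N by move: vpos vj; clear; lia.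
  rewrite (modn_small hv).
  have : (2 * n - v)%N != v by apply: contra cg => /eqP ->.
  move: H vj vpos; clear; lia.
- by rewrite eqxx.
Qed.

Local Close Scope ring_scope.

Theorem theorem4p5 (n : nat) (F : fieldType) :
  (2 <= n)%N ->
  let a := dic_a n in
  let b := dic_b n in
  let S : seq (dic n) :=
    ([seq a ^+ i | i <- iota 1 n.-1]
     ++ [seq a ^+ (2 * i) * b | i <- iota 1 n.-1]
     ++ [seq a ^+ (2 * i).+1 * b | i <- iota 1 n.-1])%g in
  \dim (Der_inn F (dic n)) = (3 * (n - 1))%N /\
  basis_of (Der_inn F (dic n)) [seq inner_der (gdelta F g) | g <- S].
Proof.
move=> n2 a b S.
have B : basis_of (Der_inn F (dic n)) [seq inner_der (gdelta F g) | g <- Sdic n].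
  apply: gen_basis; first exact: uniqS.
    by move=> g; apply: HA.
  by move=> g; apply: HB.
split; last exact: B.
move: B => /andP [/eqP <- /eqnP ->].
by rewrite size_map sizeS.
Qed.
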